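(* Let $k>l\ge0$ be integers with $k+l\ge3$, let $\theta\in\mathbb{R}$, $\xi=e^{i\theta}$, $f:\mathbb{N}\to[0,\infty)$, and $A=\xi(a^\dagger)^ka^l+\xi^*(a^\dagger)^la^k+f(a^\dagger a)$ with domain $\mathcal{D}_0$. Assume $f(n)/\beta^{kl}_n$ admits an asymptotic expansion in powers of $n^{-1/2}$, $$\frac{f(n)}{\beta^{kl}_n}\sim\kappa+\frac{L_1}{n^{1/2}}+\frac{L_2}{n}+\cdots$$ with $\kappa<2$. Then $A$ is unbounded from below, and so is every self-adjoint extension of $A$.
   Context: $\mathbb{N}=\{0,1,2,\dots\}$. $\mathcal{H}$ is a separable complex Hilbert space with orthonormal basis $(\phi_n)_{n\in\mathbb{N}}$; $\mathcal{D}_0$ is the set of finite linear combinations of the $\phi_n$. The operators $a,a^\dagger$ have domain $\mathcal{D}_0$ and act by $a\phi_n=\sqrt{n}\,\phi_{n-1}$ ($a\phi_0=0$), $a^\dagger\phi_n=\sqrt{n+1}\,\phi_{n+1}$, extended linearly. $f(a^\dagger a)$ has domain $\mathcal{D}_0$ and $f(a^\dagger a)\phi_n=f(n)\phi_n$. For integers $x$ and $s\ge0$, $(x,s)=x(x+1)\cdots(x+s-1)$ ($=1$ if $s=0$), with $(x,s)=0$ whenever $x$ is a negative integer; $\beta^{kl}_n=\sqrt{(n-l+1,l)(n-l+1,k)}$. A function $g:\mathbb{N}\to\mathbb{C}$ admits the asymptotic expansion $g(n)\sim\sum_{s\ge0}\lambda_sn^{-s/2}$ if for every $S$ there are $C,N$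 with $|g(n)-\sum_{s=0}^S\lambda_sn^{-s/2}|\le Cn^{-(S+1)/2}$ for $n\ge N$. *)

(* Defs.v *)
From Stdlib Require Import Reals ZArith.
From Coquelicot Require Import Coquelicot.
Open Scope R_scope.

(* The Hilbert space H is realized as l^2(N;C), phi_n being the n-th unit
   sequence; a vector is identified with its coefficient sequence. *)
Definition vec := nat -> C.

Definition l2 (x : vec) : Prop := ex_series (fun n => (Cmod (x n)) ^ 2).

Definition inner (x y : vec) : C :=
  (Series (fun n => Re (Cmult (Cconj (x n)) (y n))),
   Series (fun n => Im (Cmult (Cconj (x n)) (y n)))).

Definition norm2 (x : vec) : R := Series (fun n => (Cmod (x n)) ^ 2).

Definition D0 (x : vec) : Prop := exists N : nat, forall n, (N <= n)%nat -> x n = RtoC 0.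

(* annihilation / creation operators acting on coefficient sequences:
   a phi_n = sqrt n phi_{n-1},  a^dag phi_n = sqrt (n+1) phi_{n+1} *)
Definition aop (x : vec) : vec := fun m => Cmult (RtoC (sqrt (INR (S m)))) (x (S m)).
Definition adag (x : vec) : vec := fun m =>
  match m with O => RtoC 0 | S p => Cmult (RtoC (sqrt (INR m))) (x p) end.

Definition fN (f : nat -> R) (x : vec) : vec := fun m => Cmult (RtoC (f m)) (x m).

Definition xi (theta : R) : C := (cos theta, sin theta).

Definition Aop (k l : nat) (theta : R) (f : nat -> R) (x : vec) : vec := fun m =>
  Cplus (Cplus (Cmult (xi theta) (Nat.iter k adag (Nat.iter l aop x) m))
               (Cmult (Cconj (xi theta)) (Nat.iter l adag (Nat.iter k aop x) m)))
        (fN f x m).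

(* rising factorial (x,s), with (x,s) = 0 for negative integers x *)
Fixpoint rising_pos (x : Z) (s : nat) : R :=
  match s with O => 1 | S s' => rising_pos x s' * IZR (x + Z.of_nat s') end.
Definition rising (x : Z) (s : nat) : R := if (x <? 0)%Z then 0 else rising_pos x s.

Definition beta (k l n : nat) : R :=
  let x := (Z.of_nat n - Z.of_nat l + 1)%Z in sqrt (rising x l * rising x k).

Definition asymp_expansion (g : nat -> R) (lam : nat -> R) : Prop :=
  forall S0 : nat, exists C0 : R, exists N : nat, forall n : nat, (N <= n)%nat ->
    Rabs (g n - sum_f_R0 (fun s => lam s * Rpower (INR n) (- INR s / 2)) S0)
      <= C0 * Rpower (INR n) (- INR (S0 + 1) / 2).

Definition unbounded_below (D : vec -> Prop) (T : vec -> vec) : Prop :=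
  forall M : R, exists psi : vec, D psi /\ 0 < norm2 psi /\
    Re (inner psi (T psi)) < M * norm2 psi.

Definition self_adjoint (D : vec -> Prop) (T : vec -> vec) : Prop :=
  (forall x, D x -> l2 x /\ l2 (T x)) /\
  (D (fun _ => RtoC 0)) /\
  (forall x y, D x -> D y -> D (fun n => Cplus (x n) (y n)) /\
      T (fun n => Cplus (x n) (y n)) = (fun n => Cplus (T x n) (T y n))) /\
  (forall (c : C) x, D x -> D (fun n => Cmult c (x n)) /\
      T (fun n => Cmult c (x n)) = (fun n => Cmult c (T x n))) /\
  (forall x y, D x -> D y -> inner (T x) y = inner x (T y)) /\
  (* domain of the adjoint of T is contained in D, and the adjoint equals T there *)
  (forall y z, l2 y -> l2 z -> (forall x, D x -> inner (T x) y = inner x z) ->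
      D y /\ T y = z).

Definition self_adjoint_extension (k l : nat) (theta : R) (f : nat -> R)
  (D : vec -> Prop) (T : vec -> vec) : Prop :=
  self_adjoint D T /\ (forall x, D0 x -> D x /\ T x = Aop k l theta f x).

(* Main.v *)
Require Import Defs.
From Stdlib Require Import Reals ZArith Lia Lra Psatz.
From Coquelicot Require Import Coquelicot.
Open Scope R_scope.

Fixpoint sumR (g : nat -> R) (a n : nat) : R :=
  match n with O => 0 | S n' => g a + sumR g (S a) n' end.

Lemma sumR_app g a n m : sumR g a (n + m) = sumR g a n + sumR g (a + n) m.
Proof.
  revert a; induction n as [|n IH]; intros a; simpl.
  - rewrite Nat.add_0_r; ring.
  - rewrite IH. replace (S a + n)%nat with (a + S n)%nat by lia. ring.
Qed.

Lemma sumR_zero g a n : (forall i, (a <= i < a + n)%nat -> g i = 0) -> sumR g a n = 0.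
Proof.
  revert a; induction n as [|n IH]; intros a H; simpl; auto.
  rewrite H by lia. rewrite IH. ring. intros; apply H; lia.
Qed.

Lemma sumR_le_const g a n c : (forall i, (a <= i < a + n)%nat -> g i <= c) -> sumR g a n <= INR n * c.
Proof.
  revert a; induction n as [|n IH]; intros a H; simpl sumR.
  - simpl; lra.
  - rewrite S_INR. assert (g a <= c) by (apply H; lia).
    assert (sumR g (S a) n <= INR n * c) by (apply IH; intros; apply H; lia). lra.
Qed.

Lemma sum_n_sumR g n : sum_n g n = sumR g 0 (S n).
Proof.
  induction n as [|n IH].
  - rewrite sum_O. simpl. symmetry; apply Rplus_0_r.
  - rewrite sum_Sn, IH. replace (S (S n)) with (S n + 1)%nat by lia.
    rewrite sumR_app. simpl. unfold plus; simpl. ring.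
Qed.

Lemma series_finite g T : (forall t, (T <= t)%nat -> g t = 0) -> Series g = sumR g 0 T.
Proof.
  intros H. apply is_series_unique.
  change (is_lim_seq (sum_n g) (sumR g 0 T)).
  apply is_lim_seq_ext_loc with (fun _ => sumR g 0 T); [|apply is_lim_seq_const].
  exists T. intros n Hn. rewrite sum_n_sumR.
  replace (S n) with (T + (S n - T))%nat by lia. rewrite sumR_app.
  rewrite (sumR_zero g (0 + T)). ring. intros; apply H; lia.
Qed.
Fixpoint Q (s j : nat) : R := match j with O => 1 | S j' => INR (S s) * Q (S s) j' end.

Lemma Q_nonneg s j : 0 <= Q s j.
Proof. revert s; induction j; intros s; cbn [Q]; [lra|]. apply Rmult_le_pos; [apply pos_INR|apply IHj]. Qed.

Lemma Q_Sr s j : Q s (S j) = Q s j * INR (s + S j).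
Proof.
  revert s; induction j as [|j IH]; intros s.
  - cbn [Q]. rewrite Nat.add_1_r. ring.
  - change (Q s (S (S j))) with (INR (S s) * Q (S s) (S j)). rewrite IH.
    change (Q s (S j)) with (INR (S s) * Q (S s) j).
    replace (S s + S j)%nat with (s + S (S j))%nat by lia. ring.
Qed.

Lemma iter_aop l x m : Nat.iter l aop x m = Cmult (RtoC (sqrt (Q m l))) (x (m + l)%nat).
Proof.
  revert m; induction l as [|l IH]; intros m.
  - simpl. rewrite sqrt_1, Nat.add_0_r. destruct (x m); unfold Cmult, RtoC; simpl; f_equal; ring.
  - simpl Nat.iter. unfold aop at 1. rewrite IH. cbn [Q].
    rewrite sqrt_mult_alt by apply pos_INR.
    replace (S m + l)%nat with (m + S l)%nat by lia.
    destruct (x (m + S l)%nat); unfold Cmult, RtoC; simpl; f_equal; ring.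
Qed.

Lemma iter_adag k y t : Nat.iter k adag y t =
  if (t <? k)%nat then RtoC 0 else Cmult (RtoC (sqrt (Q (t - k) k))) (y (t - k)%nat).
Proof.
  revert t; induction k as [|k IH]; intros t.
  - simpl. rewrite sqrt_1, Nat.sub_0_r. destruct (y t); unfold Cmult, RtoC; simpl; f_equal; ring.
  - simpl Nat.iter. unfold adag at 1. destruct t as [|p].
    + reflexivity.
    + rewrite IH. change (S p <? S k)%nat with (p <? k)%nat.
      destruct (p <? k)%nat eqn:E.
      * unfold Cmult, RtoC; simpl; f_equal; ring.
      * apply Nat.ltb_ge in E. change (S p - S k)%nat with (p - k)%nat.
        rewrite Q_Sr. rewrite (Rmult_comm (Q _ _)).
        rewrite sqrt_mult_alt by apply pos_INR.
        replace (p - k + S k)%nat with (S p) by lia.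
        destruct (y (p-k)%nat); unfold Cmult, RtoC; simpl; f_equal; ring.
Qed.

Lemma rising_Q s j : rising_pos (Z.of_nat s + 1) j = Q s j.
Proof.
  induction j as [|j IH]; [reflexivity|].
  simpl rising_pos. rewrite Q_Sr, IH. f_equal. rewrite INR_IZR_INZ. f_equal. lia.
Qed.

Lemma beta_eq k l n : (l <= n)%nat -> beta k l n = sqrt (Q (n - l) l * Q (n - l) k).
Proof.
  intros H. unfold beta, rising.
  replace (Z.of_nat n - Z.of_nat l + 1)%Z with (Z.of_nat (n - l) + 1)%Z by lia.
  replace (Z.of_nat (n - l) + 1 <? 0)%Z with false by (symmetry; apply Z.ltb_ge; lia).
  rewrite !rising_Q. reflexivity.
Qed.

Lemma Q_bounds lo hi j s : 0 <= lo -> lo <= INR (s + 1) -> INR (s + j) <= hi ->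
  lo ^ j <= Q s j <= hi ^ j.
Proof.
  revert s; induction j as [|j IH]; intros s H0 H1 H2.
  - simpl; lra.
  - cbn [Q]. simpl pow.
    assert (A1: lo <= INR (S s + 1)) by (eapply Rle_trans; [exact H1|apply le_INR; lia]).
    assert (A2: INR (S s + j) <= hi) by (eapply Rle_trans; [|exact H2]; apply le_INR; lia).
    destruct (IH (S s) H0 A1 A2) as [B1 B2].
    assert (C1: lo <= INR (S s)) by (replace (S s) with (s+1)%nat by lia; lra).
    assert (C2: INR (S s) <= hi) by (eapply Rle_trans; [|exact H2]; apply le_INR; lia).
    split.
    + apply Rmult_le_compat; auto. apply pow_le; auto.
    + apply Rmult_le_compat; auto. apply pos_INR. apply Q_nonneg.
Qed.

Lemma pow_bern K x : 0 <= x -> 2 * INR K * x <= 1 -> (1 + x) ^ K <= 1 + 2 * INR K * x.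
Proof.
  induction K as [|K IH]; intros H0 H1.
  - simpl; lra.
  - rewrite S_INR in H1. rewrite S_INR. simpl pow.
    assert (0 <= INR K) by apply pos_INR.
    assert (H2: (1 + x) ^ K <= 1 + 2 * INR K * x) by (apply IH; nra).
    assert (0 <= (1+x)^K) by (apply pow_le; lra).
    nra.
Qed.
Definition u (a : R) : C := (cos a, sin a).
Definition psi (N0 d J : nat) (phi : R) : vec := fun t =>
  if (((N0 <=? t)%nat && ((t - N0) mod d =? 0)%nat) && ((t - N0) / d <? J)%nat)%bool
  then u (INR ((t - N0) / d) * phi) else RtoC 0.

Lemma psi_at N0 d J phi j : d <> 0%nat ->
  psi N0 d J phi (N0 + j * d)%nat = if (j <? J)%nat then u (INR j * phi) else RtoC 0.
Proof.
  intros Hd. unfold psi.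
  replace (N0 + j * d - N0)%nat with (j * d)%nat by lia.
  rewrite Nat.Div0.mod_mul, Nat.div_mul by exact Hd.
  replace (N0 <=? N0 + j * d)%nat with true by (symmetry; apply Nat.leb_le; lia).
  reflexivity.
Qed.

Lemma psi_lt N0 d J phi t : (t < N0)%nat -> psi N0 d J phi t = RtoC 0.
Proof.
  intros H. unfold psi. replace (N0 <=? t)%nat with false by (symmetry; apply Nat.leb_gt; lia).
  reflexivity.
Qed.

Lemma psi_mid N0 d J phi j r : (0 < r < d)%nat -> psi N0 d J phi (N0 + j * d + r)%nat = RtoC 0.
Proof.
  intros H. unfold psi.
  replace (N0 + j * d + r - N0)%nat with (r + j * d)%nat by lia.
  rewrite Nat.Div0.mod_add. rewrite Nat.mod_small by lia.
  replace (r =? 0)%nat with false by (symmetry; apply Nat.eqb_neq; lia).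
  rewrite Bool.andb_false_r. reflexivity.
Qed.

Lemma psi_big N0 d J phi t : d <> 0%nat -> (N0 + J * d <= t)%nat -> psi N0 d J phi t = RtoC 0.
Proof.
  intros Hd H. unfold psi.
  assert (J <= (t - N0) / d)%nat by (apply Nat.div_le_lower_bound; lia).
  replace ((t - N0) / d <? J)%nat with false by (symmetry; apply Nat.ltb_ge; lia).
  rewrite Bool.andb_false_r. reflexivity.
Qed.

Lemma block_sum g a J d : sumR g a (J * d) = sumR (fun j => sumR g (a + j * d) d) 0 J.
Proof.
  induction J as [|J IH]; [reflexivity|].
  rewrite Nat.mul_succ_l, sumR_app, IH.
  replace (S J) with (J + 1)%nat by lia. rewrite sumR_app. simpl. ring.
Qed.

Lemma sumR_ext F G a n : (forall i, (a <= i < a + n)%nat -> F i = G i) -> sumR F a n = sumR G a n.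
Proof.
  revert a; induction n as [|n IH]; intros a H; simpl; auto.
  rewrite H by lia. rewrite IH; auto. intros; apply H; lia.
Qed.

Lemma window_series N0 d J phi g : d <> 0%nat ->
  (forall t, psi N0 d J phi t = RtoC 0 -> g t = 0) ->
  Series g = sumR (fun j => g (N0 + j * d)%nat) 0 J.
Proof.
  intros Hd H. rewrite (series_finite g (N0 + J * d)).
  2:{ intros t Ht. apply H. apply psi_big; auto. }
  rewrite sumR_app, sumR_zero. 2:{ intros i Hi. apply H, psi_lt. lia. }
  rewrite block_sum, Rplus_0_l. apply sumR_ext. intros j _.
  destruct d as [|d']; [lia|]. simpl sumR.
  rewrite sumR_zero; [ring|]. intros i Hi. apply H.
  replace i with (N0 + j * S d' + (i - (N0 + j * S d')))%nat by lia.
  apply psi_mid. lia.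
Qed.
Lemma re_split (x z1 z2 : C) a r1 r2 r3 r4 F :
  Re (Cmult (Cconj (u a)) (Cplus (Cplus (Cmult x (Cmult (RtoC r1) (Cmult (RtoC r2) z1)))
        (Cmult (Cconj x) (Cmult (RtoC r3) (Cmult (RtoC r4) z2)))) (Cmult (RtoC F) (u a))))
  = r1 * r2 * Re (Cmult (Cconj (u a)) (Cmult x z1))
    + r3 * r4 * Re (Cmult (Cconj (u a)) (Cmult (Cconj x) z2)) + F * ((sin a)² + (cos a)²).
Proof.
  destruct x as [x1 x2], z1 as [a1 a2], z2 as [b1 b2].
  unfold Re, Cmult, Cconj, Cplus, RtoC, u, Rsqr; simpl. ring.
Qed.

Lemma re_fwd a b theta : a = b + (theta + PI) ->
  Re (Cmult (Cconj (u a)) (Cmult (xi theta) (u b))) = -1.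
Proof.
  intros ->. unfold Re, Cmult, Cconj, u, xi; simpl.
  rewrite (cos_plus b), (sin_plus b), neg_cos, neg_sin.
  pose proof (sin2_cos2 b) as Hb. pose proof (sin2_cos2 theta) as Ht. unfold Rsqr in *.
  replace (-1) with (-((sin b * sin b + cos b * cos b) * (sin theta * sin theta + cos theta * cos theta)))
    by (rewrite Hb, Ht; ring).
  ring.
Qed.

Lemma re_bwd a b theta : b = a + (theta + PI) ->
  Re (Cmult (Cconj (u a)) (Cmult (Cconj (xi theta)) (u b))) = -1.
Proof.
  intros ->. unfold Re, Cmult, Cconj, u, xi; simpl.
  rewrite (cos_plus a), (sin_plus a), neg_cos, neg_sin.
  pose proof (sin2_cos2 a) as Hb. pose proof (sin2_cos2 theta) as Ht. unfold Rsqr in *.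
  replace (-1) with (-((sin a * sin a + cos a * cos a) * (sin theta * sin theta + cos theta * cos theta)))
    by (rewrite Hb, Ht; ring).
  ring.
Qed.

Lemma re_zero a (x : C) : Re (Cmult (Cconj (u a)) (Cmult x (RtoC 0))) = 0.
Proof. destruct x; unfold Re, Cmult, Cconj, u, RtoC; simpl; ring. Qed.

Lemma re_zero' (y : C) : Re (Cmult (Cconj (RtoC 0)) y) = 0.
Proof. destruct y; unfold Re, Cmult, Cconj, RtoC; simpl; ring. Qed.

Lemma cmod_u a : Cmod (u a) ^ 2 = 1.
Proof.
  unfold Cmod, u. cbn [fst snd]. rewrite pow2_sqrt.
  - pose proof (sin2_cos2 a). unfold Rsqr in *. lra.
  - nra.
Qed.

Lemma cmod_0 : Cmod (RtoC 0) ^ 2 = 0.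
Proof. unfold Cmod, RtoC. cbn [fst snd]. replace (0^2+0^2) with 0 by ring. rewrite sqrt_0. ring. Qed.
Lemma g_at k l theta f N0 J j : (l < k)%nat -> (k <= N0)%nat -> (j < J)%nat ->
  let p := (N0 + j * (k - l))%nat in
  let ps := psi N0 (k - l) J (theta + PI) in
  Re (Cmult (Cconj (ps p)) (Aop k l theta f ps p)) =
    - (if (j =? 0)%nat then 0 else sqrt (Q (p - k) k) * sqrt (Q (p - k) l))
    - (if (S j <? J)%nat then sqrt (Q (p - l) l) * sqrt (Q (p - l) k) else 0) + f p.
Proof.
  intros Hlk HN Hj p ps.
  assert (Hd : (k - l)%nat <> 0%nat) by lia.
  assert (Hp : (N0 <= p)%nat) by (unfold p; lia).
  unfold Aop, fN. rewrite !iter_adag.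
  replace (p <? k)%nat with false by (symmetry; apply Nat.ltb_ge; lia).
  replace (p <? l)%nat with false by (symmetry; apply Nat.ltb_ge; lia).
  rewrite !iter_aop.
  assert (Hpp : ps p = u (INR j * (theta + PI))).
  { unfold ps, p. rewrite psi_at by exact Hd.
    replace (j <? J)%nat with true by (symmetry; apply Nat.ltb_lt; lia). reflexivity. }
  rewrite Hpp. rewrite re_split, sin2_cos2.
  assert (E2 : (p - l + k = N0 + S j * (k - l))%nat).
  { unfold p. simpl Nat.mul. lia. }
  rewrite E2. unfold ps. rewrite psi_at by exact Hd.
  destruct j as [|j'].
  - rewrite psi_lt by (unfold p; lia). rewrite re_zero. simpl Nat.eqb.
    destruct (1 <? J)%nat.
    + rewrite (re_bwd _ (INR 1 * (theta + PI))) by (simpl; ring). ring.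
    + rewrite re_zero. ring.
  - assert (E1 : (p - k + l = N0 + j' * (k - l))%nat).
    { unfold p. simpl Nat.mul. lia. }
    rewrite E1, psi_at by exact Hd.
    replace (j' <? J)%nat with true by (symmetry; apply Nat.ltb_lt; lia).
    rewrite (re_fwd _ (INR j' * (theta + PI))) by (rewrite S_INR; ring).
    simpl Nat.eqb.
    destruct (S (S j') <? J)%nat.
    + rewrite (re_bwd _ (INR (S (S j')) * (theta + PI))) by (rewrite (S_INR (S j')); ring). ring.
    + rewrite re_zero. ring.
Qed.
Lemma sum_bound h J X L : (2 <= J)%nat ->
  (forall j, (j < J)%nat -> h j <= X - (if (j =? 0)%nat then 0 else L)
                                  - (if (S j <? J)%nat then L else 0)) ->
  sumR h 0 J <= INR J * X - 2 * (INR J - 1) * L.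
Proof.
  intros HJ H.
  destruct J as [|[|J']]; try lia.
  assert (H0 : h 0%nat <= X - L).
  { pose proof (H 0%nat ltac:(lia)) as H0.
    assert (E: (1 <? S (S J'))%nat = true) by (apply Nat.ltb_lt; lia).
    rewrite E in H0. simpl Nat.eqb in H0. lra. }
  assert (H1 : h (S J') <= X - L).
  { pose proof (H (S J') ltac:(lia)) as H1.
    assert (E: (S (S J') <? S (S J'))%nat = false) by (apply Nat.ltb_ge; lia).
    rewrite E in H1. simpl Nat.eqb in H1. lra. }
  assert (Hm : sumR h 1 J' <= INR J' * (X - 2 * L)).
  { apply sumR_le_const. intros i Hi. pose proof (H i ltac:(lia)) as Hh.
    assert (E1: (i =? 0)%nat = false) by (apply Nat.eqb_neq; lia).
    assert (E2: (S i <? S (S J'))%nat = true) by (apply Nat.ltb_lt; lia).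
    rewrite E1, E2 in Hh. lra. }
  replace (S (S J')) with (1 + J' + 1)%nat by lia.
  rewrite !sumR_app. simpl sumR.
  replace (0 + 1 + J')%nat with (S J') by lia.
  replace (INR (1 + J' + 1)) with (INR J' + 2) by (rewrite !plus_INR; simpl; ring).
  lra.
Qed.

Lemma asym_bound k l f lam kappa :
  asymp_expansion (fun n => f n / beta k l n) lam -> lam O = kappa -> kappa < 2 ->
  exists eps N1, 0 < eps <= 1 /\
    forall n, (N1 <= n)%nat -> 0 < beta k l n -> f n <= (2 - eps) * beta k l n.
Proof.
  intros Has Hl Hk.
  destruct (Has 0%nat) as [C0 [N HN]].
  set (de := (2 - kappa) / 2).
  assert (Hde : 0 < de) by (unfold de; lra).
  destruct (INR_unbounded ((C0 / de) ^ 2)) as [N2 HN2].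
  exists (Rmin 1 de), (Nat.max N (Nat.max N2 1)). split.
  { split; [apply Rmin_glb_lt; lra | apply Rmin_l]. }
  intros n Hn Hb.
  assert (Hn0 : 0 < INR n) by (apply lt_0_INR; lia).
  assert (HnN2 : INR N2 <= INR n) by (apply le_INR; lia).
  specialize (HN n ltac:(lia)). simpl sum_f_R0 in HN.
  replace (- INR 0 / 2) with 0 in HN by (simpl; field).
  replace (- INR (0 + 1) / 2) with (- / 2) in HN by (simpl; field).
  replace (- 0 / 2) with 0 in HN by field.
  rewrite Rpower_O, Rpower_Ropp, Rpower_sqrt in HN by exact Hn0.
  rewrite Hl, Rmult_1_r in HN.
  assert (Hs : 0 < sqrt (INR n)) by (apply sqrt_lt_R0; exact Hn0).
  assert (Hss : sqrt (INR n) * sqrt (INR n) = INR n) by (apply sqrt_sqrt; lra).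
  assert (HC : C0 * / sqrt (INR n) <= de).
  { destruct (Rle_or_lt C0 0) as [Hc|Hc].
    - assert (0 < / sqrt (INR n)) by (apply Rinv_0_lt_compat; exact Hs).
      nra.
    - assert (C0 <= de * sqrt (INR n)).
      { assert (E: (C0 / de) ^ 2 * (de*de) = C0 * C0) by (field; lra).
        assert (C0 * C0 < (de * sqrt (INR n)) * (de * sqrt (INR n))).
        { replace ((de * sqrt (INR n)) * (de * sqrt (INR n))) with
            (de*de * (sqrt (INR n) * sqrt (INR n))) by ring. rewrite Hss.
          assert (0 < de*de) by nra. nra. }
        assert (0 < de * sqrt (INR n)) by (apply Rmult_lt_0_compat; lra).
        nra. }
      apply Rmult_le_reg_r with (sqrt (INR n)); [exact Hs|].
      rewrite Rmult_assoc, Rinv_l by lra. lra. }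
  assert (Hq : f n / beta k l n <= 2 - Rmin 1 de).
  { pose proof (Rmin_r 1 de). apply Rabs_le_between in HN. unfold de in *. lra. }
  replace (f n) with (f n / beta k l n * beta k l n) by (field; lra).
  apply Rmult_le_compat_r; lra.
Qed.
Lemma sumR_const n a c : sumR (fun _ => c) a n = INR n * c.
Proof. revert a; induction n; intros a; simpl sumR; [simpl; ring|]. rewrite IHn, S_INR; ring. Qed.

Lemma Qprod_lower k l lo hi s : (l <= k)%nat -> 0 <= lo -> lo <= INR (s + 1) -> INR (s + k) <= hi ->
  sqrt (lo ^ (k + l)) <= sqrt (Q s k) * sqrt (Q s l).
Proof.
  intros Hlk H0 H1 H2. rewrite <- sqrt_mult_alt by apply Q_nonneg.
  apply sqrt_le_1_alt. rewrite pow_add.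
  assert (H3 : INR (s + l) <= hi) by (eapply Rle_trans; [|exact H2]; apply le_INR; lia).
  destruct (Q_bounds lo hi k s H0 H1 H2). destruct (Q_bounds lo hi l s H0 H1 H3).
  apply Rmult_le_compat; auto; apply pow_le; auto.
Qed.

Lemma Qprod_upper k l lo hi s : (l <= k)%nat -> 0 <= lo -> lo <= INR (s + 1) -> INR (s + k) <= hi ->
  sqrt (Q s l * Q s k) <= sqrt (hi ^ (k + l)).
Proof.
  intros Hlk H0 H1 H2. apply sqrt_le_1_alt. rewrite pow_add, Rmult_comm.
  assert (H3 : INR (s + l) <= hi) by (eapply Rle_trans; [|exact H2]; apply le_INR; lia).
  destruct (Q_bounds lo hi k s H0 H1 H2). destruct (Q_bounds lo hi l s H0 H1 H3).
  apply Rmult_le_compat; auto; apply Q_nonneg.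
Qed.

Lemma part1 k l theta f kappa lam :
  (l < k)%nat -> (3 <= k + l)%nat -> (forall n, 0 <= f n) ->
  asymp_expansion (fun n => f n / beta k l n) lam -> lam O = kappa -> kappa < 2 ->
  unbounded_below D0 (Aop k l theta f).
Proof.
  intros Hlk HK Hf0 Has Hl Hk.
  destruct (asym_bound k l f lam kappa Has Hl Hk) as [eps [N1 [Heps Hf]]].
  intros M.
  set (d := (k - l)%nat). set (K := (k + l)%nat).
  assert (Hd : d <> 0%nat) by (unfold d; lia).
  destruct (INR_unbounded (6 / eps + 2)) as [J HJ].
  assert (HJ2 : (2 <= J)%nat).
  { assert (6 / eps > 0) by (apply Rdiv_lt_0_compat; lra).
    assert (INR 2 < INR J) by (simpl; lra). apply INR_lt in H0. lia. }
  assert (HJe : 6 <= INR J * eps).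
  { assert (6 / eps * eps = 6) by (field; lra). nra. }
  set (a := (J * d + 2 * k - 1)%nat). set (A := INR a).
  assert (HA : 0 <= A) by apply pos_INR.
  assert (HKr : 2 <= INR K) by (replace 2 with (INR 2) by (simpl; ring); apply le_INR; lia).
  destruct (INR_unbounded (8 * INR K * A / eps + Rabs M * INR J + 1)) as [N2 HN2].
  set (N0 := (k + N1 + N2)%nat).
  set (lo := INR (N0 - k + 1)). set (hi := INR (N0 + J * d + k)).
  assert (Hlo : INR N2 <= lo) by (unfold lo; apply le_INR; unfold N0; lia).
  assert (H8 : 0 <= 8 * INR K * A / eps).
  { apply Rmult_le_pos; [|apply Rlt_le, Rinv_0_lt_compat; lra]. nra. }
  assert (HMJ : 0 <= Rabs M * INR J) by (apply Rmult_le_pos; [apply Rabs_pos|apply pos_INR]).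
  assert (Hlo1 : 1 <= lo) by lra.
  assert (Hhi : hi = lo + A).
  { unfold hi, lo, A. rewrite <- plus_INR. f_equal. unfold a, N0. lia. }
  set (L := sqrt (lo ^ K)). set (U := sqrt (hi ^ K)).
  assert (HL : lo <= L).
  { unfold L. rewrite <- (sqrt_pow2 lo) at 1 by lra. apply sqrt_le_1_alt.
    apply Rle_pow; [lra|unfold K; lia]. }
  assert (HU : U <= (1 + eps / 4) * L).
  { assert (Hb : (1 + A / lo) ^ K <= 1 + 2 * INR K * (A / lo)).
    { apply pow_bern. apply Rdiv_le_0_compat; lra.
      apply Rmult_le_reg_r with lo; [lra|].
      replace (2 * INR K * (A / lo) * lo) with (2 * INR K * A) by (field; lra).
      assert (8 * INR K * A <= eps * lo).
      { assert (8 * INR K * A / eps * eps = 8 * INR K * A) by (field; lra). nra. }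
      nra. }
    assert (Hc : 2 * INR K * (A / lo) <= eps / 4).
    { apply Rmult_le_reg_r with lo; [lra|].
      replace (2 * INR K * (A / lo) * lo) with (2 * INR K * A) by (field; lra).
      assert (8 * INR K * A / eps * eps = 8 * INR K * A) by (field; lra). nra. }
    assert (Hh : hi ^ K <= (1 + eps / 4) * lo ^ K).
    { rewrite Hhi. replace (lo + A) with (lo * (1 + A / lo)) by (field; lra).
      rewrite Rpow_mult_distr. assert (0 < lo ^ K) by (apply pow_lt; lra). nra. }
    unfold U, L. eapply Rle_trans; [apply sqrt_le_1_alt; exact Hh|].
    rewrite sqrt_mult_alt by lra.
    apply Rmult_le_compat_r; [apply sqrt_pos|].
    rewrite <- (sqrt_pow2 (1 + eps/4)) at 2 by lra. apply sqrt_le_1_alt.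
    nra. }
  set (phi := theta + PI).
  assert (Hnorm : norm2 (psi N0 d J phi) = INR J).
  { unfold norm2. rewrite (window_series N0 d J phi) by
      (auto; intros t Ht; rewrite Ht; apply cmod_0).
    rewrite <- (Rmult_1_r (INR J)), <- (sumR_const J 0 1). apply sumR_ext. intros i Hi.
    rewrite psi_at by exact Hd.
    replace (i <? J)%nat with true by (symmetry; apply Nat.ltb_lt; lia).
    apply cmod_u. }
  assert (HNk : (k <= N0)%nat) by (unfold N0; lia).
  assert (Hinner : Re (inner (psi N0 d J phi) (Aop k l theta f (psi N0 d J phi)))
                   <= INR J * ((2 - eps) * U) - 2 * (INR J - 1) * L).
  { change (Re (inner (psi N0 d J phi) (Aop k l theta f (psi N0 d J phi)))) with
      (Series (fun n => Re (Cmult (Cconj (psi N0 d J phi n)) (Aop k l theta f (psi N0 d J phi) n)))).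
    rewrite (window_series N0 d J phi) by
      (auto; intros t Ht; rewrite Ht; apply re_zero').
    apply sum_bound; [exact HJ2|].
    intros j Hj.
    pose proof (g_at k l theta f N0 J j Hlk HNk Hj) as G. cbv zeta in G.
    fold d phi in G. rewrite G.
    set (p := (N0 + j * d)%nat).
    assert (Hm1 : (j * d <= J * d)%nat) by (apply Nat.mul_le_mono_r; lia).
    assert (Hm2 : (S j * d <= J * d)%nat) by (apply Nat.mul_le_mono_r; lia).
    simpl Nat.mul in Hm2.
    assert (Hlo0 : 0 <= lo) by lra.
    assert (C1 : L <= sqrt (Q (p - k) k) * sqrt (Q (p - k) l)).
    { apply (Qprod_lower k l lo hi); [lia|lra| |].
      - unfold lo; apply le_INR; unfold p; lia.
      - unfold hi; apply le_INR; unfold p; lia. }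
    assert (C2 : L <= sqrt (Q (p - l) l) * sqrt (Q (p - l) k)).
    { rewrite Rmult_comm. apply (Qprod_lower k l lo hi); [lia|lra| |].
      - unfold lo; apply le_INR; unfold p; lia.
      - unfold hi; apply le_INR; unfold p, d in *; lia. }
    assert (Hbeta : beta k l p <= U /\ 0 < beta k l p).
    { rewrite beta_eq by (unfold p; lia). split.
      - apply (Qprod_upper k l lo hi); [lia|lra| |].
        + unfold lo; apply le_INR; unfold p; lia.
        + unfold hi; apply le_INR; unfold p, d in *; lia.
      - apply sqrt_lt_R0. rewrite Rmult_comm.
        assert (0 < sqrt (lo ^ (k + l))) by (apply sqrt_lt_R0, pow_lt; lra).
        assert (0 < sqrt (Q (p - l) k) * sqrt (Q (p - l) l)).
        { eapply Rlt_le_trans; [exact H|]. apply (Qprod_lower k l lo hi); [lia|lra| |].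
          + unfold lo; apply le_INR; unfold p; lia.
          + unfold hi; apply le_INR; unfold p, d in *; lia. }
        rewrite <- sqrt_mult_alt in H0 by apply Q_nonneg.
        destruct (Rle_or_lt (Q (p - l) k * Q (p - l) l) 0) as [Hz|Hz]; auto.
        rewrite sqrt_neg_0 in H0 by exact Hz. lra. }
    assert (Hfp : f p <= (2 - eps) * U).
    { destruct Hbeta as [Hb1 Hb2].
      eapply Rle_trans; [apply Hf; [unfold p, N0; lia|exact Hb2]|].
      apply Rmult_le_compat_l; lra. }
    destruct (j =? 0)%nat; destruct (S j <? J)%nat; lra. }
  exists (psi N0 d J phi). split; [|split].
  - exists (N0 + J * d)%nat. intros n Hn. apply psi_big; auto.
  - rewrite Hnorm. apply lt_0_INR. lia.
  - rewrite Hnorm. eapply Rle_lt_trans; [exact Hinner|].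
    assert (0 <= L) by (unfold L; apply sqrt_pos).
    assert (S1 : (2 - eps) * U <= (2 - eps / 2) * L).
    { assert ((2 - eps) * U <= (2 - eps) * ((1 + eps / 4) * L)) by (apply Rmult_le_compat_l; lra).
      nra. }
    assert (0 <= INR J) by apply pos_INR.
    assert (S2 : INR J * ((2 - eps) * U) - 2 * (INR J - 1) * L <= - L) by nra.
    assert (S3 : - (Rabs M * INR J) <= M * INR J).
    { pose proof (Rle_abs (- M)). rewrite Rabs_Ropp in H1. nra. }
    lra.
Qed.

Theorem proposition4p18 (k l : nat) (theta : R) (f : nat -> R)
  (kappa : R) (lam : nat -> R) :
  (l < k)%nat -> (3 <= k + l)%nat -> (forall n, 0 <= f n) ->
  asymp_expansion (fun n => f n / beta k l n) lam -> lam O = kappa -> kappa < 2 ->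
  unbounded_below D0 (Aop k l theta f) /\
  (forall (D : vec -> Prop) (T : vec -> vec),
     self_adjoint_extension k l theta f D T -> unbounded_below D T).
Proof.
  intros H1 H2 H3 H4 H5 H6.
  pose proof (part1 k l theta f kappa lam H1 H2 H3 H4 H5 H6) as P.
  split; [exact P|].
  intros D T [_ Hext] M.
  destruct (P M) as [x [Hx [Hn Hi]]].
  destruct (Hext x Hx) as [HD HT].
  exists x. split; [exact HD|]. split; [exact Hn|]. rewrite HT. exact Hi.
Qed.
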